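(* Let $\sigma_0,\sigma_\epsilon>0$ with $\sigma_0\neq\sigma_\epsilon$, $\theta_0\in\mathbb{R}$, prior $\Theta\sim\mathrm{Laplace}(\theta_0,\sigma_0)$, signal $X=\Theta+\epsilon$ with $\epsilon\sim\mathrm{Laplace}(0,\sigma_\epsilon)$ independent of $\Theta$, and let $\theta_1(x)=\mathbb{E}[\Theta\mid X=x]$. Then the DeGroot coefficient $\omega=\frac{d\theta_1}{dx}\big|_{x=\theta_0}$ is $$\omega=\frac{\sigma_0}{\sigma_0+\sigma_\epsilon}.$$
   Context: $\mathrm{Laplace}(\mu,s)$ has density $t\mapsto\frac{1}{2s}e^{-|t-\mu|/s}$. The posterior mean is $\theta_1(x)=\frac{\int\theta f_\Theta(\theta)l_\epsilon(x-\theta)d\theta}{\int f_\Theta(\theta)l_\epsilon(x-\theta)d\theta}$. *)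

(* Defs.v *)
From Stdlib Require Import Reals.
From Coquelicot Require Import Coquelicot.
Open Scope R_scope.

Definition laplace_pdf (mu s : R) (t : R) : R :=
  / (2 * s) * exp (- Rabs (t - mu) / s).

Definition integral_R (f : R -> R) : R :=
  RInt_gen f (Rbar_locally m_infty) (Rbar_locally p_infty).

(* Posterior mean E[Theta | X = x] for prior Theta ~ Laplace(theta0, s0)
   and X = Theta + eps, eps ~ Laplace(0, se) independent of Theta:
   theta1(x) = (int theta f(theta) l(x-theta)) / (int f(theta) l(x-theta)). *)
Definition posterior_mean (theta0 s0 se : R) (x : R) : R :=
  integral_R (fun th => th * laplace_pdf theta0 s0 th * laplace_pdf 0 se (x - th))
  / integral_R (fun th => laplace_pdf theta0 s0 th * laplace_pdf 0 se (x - th)).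

(* Main.v *)
Require Import Defs.
From Stdlib Require Import Reals Lra.
From Coquelicot Require Import Coquelicot.
Open Scope R_scope.

Definition Ef (la nu A B p t : R) := (A + B*t) * exp(la*(t-p)+nu).
Definition Ff (la nu A B p t : R) := exp(la*(t-p)+nu) * ((A+B*t)/la - B/la^2).

Lemma Ff_deriv la nu A B p t : la<>0 -> is_derive (Ff la nu A B p) t (Ef la nu A B p t).
Proof. intros H. unfold Ff, Ef. auto_derive; [auto| unfold Rminus; field; auto]. Qed.

Lemma Ef_cont la nu A B p t : continuous (Ef la nu A B p) t.
Proof. apply (ex_derive_continuous (Ef la nu A B p) t). unfold Ef. auto_derive. auto. Qed.

Lemma piece_mid la nu A B p u v : la<>0 ->
  is_RInt (Ef la nu A B p) u v (Ff la nu A B p v - Ff la nu A B p u).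
Proof.
  intros H. exact (is_RInt_derive (Ff la nu A B p) (Ef la nu A B p) u v
    (fun x _ => Ff_deriv la nu A B p x H) (fun x _ => Ef_cont la nu A B p x)).
Qed.

Lemma G_lim la nu A B p : la <> 0 ->
  is_lim (fun s => exp s * ((A + B*((s-nu)/la+p))/la - B/la^2)) m_infty 0.
Proof.
  intros H.
  set (Cc := ((A + B*(-nu/la + p))/la - B/la^2)).
  set (Dd := (B/la^2)).
  apply is_lim_ext with (fun s => Cc * exp s + Dd * (s * exp s)).
  { intros s. unfold Cc, Dd. field. auto. }
  replace 0 with (0 + 0) by ring.
  apply is_lim_plus'.
  - replace (Finite 0) with (Rbar_mult Cc 0) by (simpl; f_equal; ring).
    apply is_lim_scal_l. apply is_lim_exp_m.
  - replace (Finite 0) with (Rbar_mult Dd 0) by (simpl; f_equal; ring).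
    apply is_lim_scal_l. apply is_lim_mul_exp_m.
Qed.

Lemma at_point_lim (f : R -> R) a : filterlim f (at_point a) (locally (f a)).
Proof. intros P HP. unfold filtermap, at_point. apply locally_singleton. exact HP. Qed.

Lemma aff_p la nu p : la < 0 ->
  filterlim (fun t => la*(t-p)+nu) (Rbar_locally p_infty) (Rbar_locally m_infty).
Proof.
  intros H P [M HM]. exists (p + (M-nu)/la). intros t Ht. apply HM.
  assert (E : la * ((M-nu)/la) = M - nu) by (field; lra).
  assert (t - p > (M-nu)/la) by lra. nra.
Qed.

Lemma aff_m la nu p : 0 < la ->
  filterlim (fun t => la*(t-p)+nu) (Rbar_locally m_infty) (Rbar_locally m_infty).
Proof.
  intros H P [M HM]. exists (p + (M-nu)/la). intros t Ht. apply HM.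
  assert (E : la * ((M-nu)/la) = M - nu) by (field; lra).
  assert (t - p < (M-nu)/la) by lra. nra.
Qed.

Lemma Ff_lim_gen la nu A B p (F : (R -> Prop) -> Prop) {FF : Filter F} : la <> 0 ->
  filterlim (fun t => la*(t-p)+nu) F (Rbar_locally m_infty) ->
  filterlim (Ff la nu A B p) F (locally 0).
Proof.
  intros H Hf.
  apply filterlim_ext with
    (fun t => (fun s => exp s * ((A + B*((s-nu)/la+p))/la - B/la^2)) (la*(t-p)+nu)).
  { intros t. unfold Ff. simpl. replace ((la * (t - p) + nu - nu) / la + p) with t
      by (field; auto). reflexivity. }
  exact (filterlim_comp _ _ _ _ _ F _ _ Hf (G_lim la nu A B p H)).
Qed.

Lemma tail_right la nu A B p u : la < 0 ->
  is_RInt_gen (Ef la nu A B p) (at_point u) (Rbar_locally p_infty) (0 - Ff la nu A B p u).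
Proof.
  intros H. assert (H0 : la <> 0) by lra.
  apply is_RInt_gen_ext with (Derive (Ff la nu A B p)).
  { apply filter_forall. intros _ x _. apply is_derive_unique, Ff_deriv; auto. }
  apply is_RInt_gen_Derive.
  - apply filter_forall. intros _ x _. eexists. apply Ff_deriv; auto.
  - apply filter_forall. intros _ x _.
    apply continuous_ext with (Ef la nu A B p).
    { intros y. symmetry. apply is_derive_unique, Ff_deriv; auto. }
    apply Ef_cont.
  - apply at_point_lim.
  - apply Ff_lim_gen; [exact _ | auto | apply aff_p; auto].
Qed.

Lemma tail_left la nu A B p u : 0 < la ->
  is_RInt_gen (Ef la nu A B p) (Rbar_locally m_infty) (at_point u) (Ff la nu A B p u - 0).
Proof.
  intros H. assert (H0 : la <> 0) by lra.
  apply is_RInt_gen_ext with (Derive (Ff la nu A B p)).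
  { apply filter_forall. intros _ x _. apply is_derive_unique, Ff_deriv; auto. }
  apply is_RInt_gen_Derive.
  - apply filter_forall. intros _ x _. eexists. apply Ff_deriv; auto.
  - apply filter_forall. intros _ x _.
    apply continuous_ext with (Ef la nu A B p).
    { intros y. symmetry. apply is_derive_unique, Ff_deriv; auto. }
    apply Ef_cont.
  - apply Ff_lim_gen; [exact _ | auto | apply aff_m; auto].
  - apply at_point_lim.
Qed.

Definition Tval p d al be A B :=
  (Ff (al+be) (-(be*d)) A B p p - 0)
  + (Ff (be-al) (-(be*d)) A B p (p+d) - Ff (be-al) (-(be*d)) A B p p)
  + (0 - Ff (-(al+be)) (be*d) A B p (p+d)).

Lemma total p d al be A B : 0<al -> 0<be -> al<>be -> 0<=d ->
  is_RInt_gen (fun t => (A+B*t)*exp(-al*Rabs(t-p) - be*Rabs(t-(p+d))))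
    (Rbar_locally m_infty) (Rbar_locally p_infty) (Tval p d al be A B).
Proof.
  intros Ha Hb Hab Hd. unfold Tval.
  set (g := fun t => (A+B*t)*exp(-al*Rabs(t-p) - be*Rabs(t-(p+d)))).
  assert (H1 : is_RInt_gen g (Rbar_locally m_infty) (at_point p)
     (Ff (al+be) (-(be*d)) A B p p - 0)).
  { apply is_RInt_gen_ext with (Ef (al+be) (-(be*d)) A B p).
    2: apply tail_left; lra.
    exists (fun a => a < p) (fun b => b = p).
    - exists p; intros; auto.
    - reflexivity.
    - intros x y Hx Hy t Ht; simpl in Ht; subst y.
      rewrite Rmin_left, Rmax_right in Ht by lra. unfold Ef, g.
      rewrite (Rabs_left (t-p)) by lra. rewrite (Rabs_left (t-(p+d))) by lra.
      f_equal. f_equal. ring. }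
  assert (H2 : is_RInt_gen g (at_point p) (at_point (p+d))
     (Ff (be-al) (-(be*d)) A B p (p+d) - Ff (be-al) (-(be*d)) A B p p)).
  { apply is_RInt_gen_at_point.
    apply is_RInt_ext with (Ef (be-al) (-(be*d)) A B p).
    2: apply piece_mid; lra.
    intros t Ht. rewrite Rmin_left, Rmax_right in Ht by lra. unfold Ef, g.
    rewrite (Rabs_right (t-p)) by lra. rewrite (Rabs_left (t-(p+d))) by lra.
    f_equal. f_equal. ring. }
  assert (H3 : is_RInt_gen g (at_point (p+d)) (Rbar_locally p_infty)
     (0 - Ff (-(al+be)) (be*d) A B p (p+d))).
  { apply is_RInt_gen_ext with (Ef (-(al+be)) (be*d) A B p).
    2: apply tail_right; lra.
    exists (fun a => a = p+d) (fun b => b > p+d).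
    - reflexivity.
    - exists (p+d); intros; auto.
    - intros x y Hx Hy t Ht; simpl in Ht; subst x.
      rewrite Rmin_left, Rmax_right in Ht by lra. unfold Ef, g.
      rewrite (Rabs_right (t-p)) by lra. rewrite (Rabs_right (t-(p+d))) by lra.
      f_equal. f_equal. ring. }
  exact (is_RInt_gen_Chasles _ _ _ _ (is_RInt_gen_Chasles _ _ _ _ H1 H2) H3).
Qed.

Lemma exp_le' x y : x <= y -> exp x <= exp y.
Proof. intros H. destruct (Rle_lt_or_eq_dec _ _ H). left; apply exp_increasing; auto. subst; lra. Qed.

Lemma Tpos p d al be : 0<al -> 0<be -> al<>be -> 0<=d -> 0 < Tval p d al be 1 0.
Proof.
  intros Ha Hb Hab Hd. unfold Tval, Ff.
  assert (E1: (al+be)*(p-p) + -(be*d) = -(be*d)) by ring. rewrite E1.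
  assert (E2: (be-al)*(p+d-p) + -(be*d) = -(al*d)) by ring. rewrite E2.
  assert (E3: (be-al)*(p-p) + -(be*d) = -(be*d)) by ring. rewrite E3.
  assert (E4: -(al+be)*(p+d-p) + be*d = -(al*d)) by ring. rewrite E4.
  assert (Hc : al + be <> 0) by lra.
  assert (Hba : be - al <> 0) by lra.
  replace (exp (- (be * d)) * ((1 + 0 * p) / (al + be) - 0 / (al + be) ^ 2) - 0 +
   (exp (- (al * d)) * ((1 + 0 * (p + d)) / (be - al) - 0 / (be - al) ^ 2) -
    exp (- (be * d)) * ((1 + 0 * p) / (be - al) - 0 / (be - al) ^ 2)) +
   (0 - exp (- (al * d)) * ((1 + 0 * (p + d)) / - (al + be) - 0 / (- (al + be)) ^ 2)))
   with ((exp (-(be*d)) + exp (-(al*d))) / (al+be) + (exp (-(al*d)) - exp (-(be*d))) / (be-al))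
   by (field; auto).
  assert (P1 : 0 < (exp (-(be*d)) + exp (-(al*d))) / (al+be)).
  { apply Rdiv_lt_0_compat. pose proof (exp_pos (-(be*d))); pose proof (exp_pos (-(al*d))); lra. lra. }
  assert (P2 : 0 <= (exp (-(al*d)) - exp (-(be*d))) / (be-al)).
  { destruct (Rlt_dec al be).
    - apply Rmult_le_pos. assert (exp (-(be*d)) <= exp (-(al*d))) by (apply exp_le'; nra). lra.
      left. apply Rinv_0_lt_compat. lra.
    - replace ((exp (-(al*d)) - exp (-(be*d))) / (be-al)) with
        ((exp (-(be*d)) - exp (-(al*d))) * / (al-be)) by (field; lra).
      apply Rmult_le_pos. assert (exp (-(al*d)) <= exp (-(be*d))) by (apply exp_le'; nra). lra.
      left. apply Rinv_0_lt_compat. lra. }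
  lra.
Qed.


Lemma pw theta0 s0 se x p d al be A B th :
  (forall th, -Rabs(th-theta0)/s0 + -Rabs(x-th-0)/se = -al*Rabs(th-p) - be*Rabs(th-(p+d))) ->
  (/(2*s0) * /(2*se)) * ((A+B*th)*exp(-al*Rabs(th-p) - be*Rabs(th-(p+d)))) =
  (A + B*th) * (laplace_pdf theta0 s0 th * laplace_pdf 0 se (x - th)).
Proof.
  intros HE. unfold laplace_pdf. rewrite <- HE. rewrite exp_plus. ring.
Qed.

Lemma pm_case theta0 s0 se x p d al be : 0<s0 -> 0<se -> 0<=d ->
  0 < al -> 0 < be -> al <> be ->
  (forall th, -Rabs(th-theta0)/s0 + -Rabs(x-th-0)/se = -al*Rabs(th-p) - be*Rabs(th-(p+d))) ->
  posterior_mean theta0 s0 se x = Tval p d al be 0 1 / Tval p d al be 1 0.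
Proof.
  intros H0 He Hd Ha Hb Hab HE.
  assert (HK : /(2*s0) * /(2*se) <> 0).
  { apply Rmult_integral_contrapositive; split; apply Rinv_neq_0_compat; lra. }
  assert (HT := Tpos p d al be Ha Hb Hab Hd).
  assert (G : forall A B, is_RInt_gen
     (fun th => (A + B*th) * (laplace_pdf theta0 s0 th * laplace_pdf 0 se (x - th)))
     (Rbar_locally m_infty) (Rbar_locally p_infty) ((/(2*s0) * /(2*se)) * Tval p d al be A B)).
  { intros A B.
    apply (is_RInt_gen_ext (Fa := Rbar_locally m_infty) (Fb := Rbar_locally p_infty))  with
      (fun t => scal (/(2*s0) * /(2*se)) ((A+B*t)*exp(-al*Rabs(t-p) - be*Rabs(t-(p+d))))).
    - apply filter_forall. intros _ th _. exact (pw theta0 s0 se x p d al be A B th HE).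
    - pose proof (total p d al be A B Ha Hb Hab Hd) as Ht. revert Ht.
      generalize (Tval p d al be A B). intros v Ht.
      exact (is_RInt_gen_scal (Fa := Rbar_locally m_infty) (Fb := Rbar_locally p_infty) _ _ _ Ht). }
  assert (G1 := G 0 1). assert (G0 := G 1 0). clear G.
  revert G1 G0 HT. generalize (Tval p d al be 0 1) (Tval p d al be 1 0).
  intros T01 T10 G1 G0 HT.
  unfold posterior_mean, integral_R.
  rewrite (is_RInt_gen_unique _ (/(2*s0) * /(2*se) * T01)).
  rewrite (is_RInt_gen_unique _ (/(2*s0) * /(2*se) * T10)).
  - field. split; [lra | split; lra].
  - eapply (is_RInt_gen_ext (Fa := Rbar_locally m_infty) (Fb := Rbar_locally p_infty)). 2: exact G0.
    apply filter_forall. intros _ th _. match goal with |- ?a = ?b => change (@eq R a b) end. ring.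
  - eapply (is_RInt_gen_ext (Fa := Rbar_locally m_infty) (Fb := Rbar_locally p_infty)). 2: exact G1.
    apply filter_forall. intros _ th _. match goal with |- ?a = ?b => change (@eq R a b) end. ring.
Qed.

Definition T10c al be d := (exp(-(be*d)) + exp(-(al*d)))/(al+be) + (exp(-(al*d)) - exp(-(be*d)))/(be-al).
Definition T01c p al be d := exp(-(be*d))*(p/(al+be) - 1/(al+be)^2)
  + (exp(-(al*d))*((p+d)/(be-al) - 1/(be-al)^2) - exp(-(be*d))*(p/(be-al) - 1/(be-al)^2))
  + exp(-(al*d))*((p+d)/(al+be) + 1/(al+be)^2).

Lemma Texp p d al be A B : al + be <> 0 -> be - al <> 0 ->
  Tval p d al be A B =
    exp(-(be*d))*((A+B*p)/(al+be) - B/(al+be)^2)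
  + (exp(-(al*d))*((A+B*(p+d))/(be-al) - B/(be-al)^2) - exp(-(be*d))*((A+B*p)/(be-al) - B/(be-al)^2))
  + exp(-(al*d))*((A+B*(p+d))/(al+be) + B/(al+be)^2).
Proof.
  intros Hc Hd. unfold Tval, Ff.
  assert (E1: (al+be)*(p-p) + -(be*d) = -(be*d)) by ring. rewrite E1.
  assert (E2: (be-al)*(p+d-p) + -(be*d) = -(al*d)) by ring. rewrite E2.
  assert (E3: (be-al)*(p-p) + -(be*d) = -(be*d)) by ring. rewrite E3.
  assert (E4: -(al+be)*(p+d-p) + be*d = -(al*d)) by ring. rewrite E4.
  field. auto.
Qed.

Lemma D1 p al be : 0 < al -> 0 < be -> al <> be ->
  is_derive (fun h => T01c p al be h / T10c al be h) 0 (be/(al+be)).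
Proof.
  intros Ha Hb Hab. assert (al+be<>0) by lra. assert (be-al<>0) by lra.
  unfold T01c, T10c. auto_derive.
  - rewrite !Rmult_0_r, !Ropp_0, !exp_0.
    match goal with |- ?e <> 0 => replace e with (2/(al+be)) by (field; auto) end.
    apply Rgt_not_eq, Rdiv_lt_0_compat; lra.
  - rewrite !Rmult_0_r, !Ropp_0, !exp_0. field. auto.
Qed.

Lemma D2 p al be : 0 < al -> 0 < be -> al <> be ->
  is_derive (fun h => T01c (p+h) al be (-h) / T10c al be (-h)) 0 (al/(al+be)).
Proof.
  intros Ha Hb Hab. assert (al+be<>0) by lra. assert (be-al<>0) by lra.
  unfold T01c, T10c. auto_derive.
  - rewrite ?Ropp_0, ?Rmult_0_r, ?Ropp_0, ?exp_0.
    match goal with |- ?e <> 0 => replace e with (2/(al+be)) by (field; auto) end.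
    apply Rgt_not_eq, Rdiv_lt_0_compat; lra.
  - rewrite ?Ropp_0, ?Rmult_0_r, ?Ropp_0, ?exp_0. field. auto.
Qed.


Lemma Tc_eq1 p d al be : al + be <> 0 -> be - al <> 0 ->
  Tval p d al be 0 1 = T01c p al be d.
Proof. intros. rewrite Texp by auto. unfold T01c. field. auto. Qed.

Lemma Tc_eq0 p d al be : al + be <> 0 -> be - al <> 0 ->
  Tval p d al be 1 0 = T10c al be d.
Proof. intros. rewrite Texp by auto. unfold T10c. field. auto. Qed.

Lemma glue (f : R -> R) x0 g1 g2 l :
  (forall h, 0 <= h -> f (x0+h) = g1 h) -> (forall h, h <= 0 -> f (x0+h) = g2 h) ->
  is_derive g1 0 l -> is_derive g2 0 l -> is_derive f x0 l.
Proof.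
  intros Hf1 Hf2 H1 H2. apply is_derive_Reals. apply is_derive_Reals in H1, H2.
  intros eps Heps. destruct (H1 eps Heps) as [d1 Hd1]. destruct (H2 eps Heps) as [d2 Hd2].
  assert (Hpos : 0 < Rmin d1 d2) by (apply Rmin_pos; apply cond_pos).
  exists (mkposreal _ Hpos). intros h Hh0 Hh. simpl in Hh.
  assert (E1 : f x0 = g1 0) by (rewrite <- (Hf1 0 (Rle_refl 0)), Rplus_0_r; reflexivity).
  assert (E2 : f x0 = g2 0) by (rewrite <- (Hf2 0 (Rle_refl 0)), Rplus_0_r; reflexivity).
  destruct (Rle_dec 0 h) as [Hp|Hn].
  - rewrite (Hf1 h Hp), E1. pose proof (Hd1 h Hh0) as K. rewrite Rplus_0_l in K.
    apply K. apply Rlt_le_trans with (1 := Hh). apply Rmin_l.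
  - rewrite (Hf2 h ltac:(lra)), E2. pose proof (Hd2 h Hh0) as K. rewrite Rplus_0_l in K.
    apply K. apply Rlt_le_trans with (1 := Hh). apply Rmin_r.
Qed.

Theorem mainTheorem12 (s0 se theta0 : R) :
  0 < s0 -> 0 < se -> s0 <> se ->
  is_derive (posterior_mean theta0 s0 se) theta0 (s0 / (s0 + se)).
Proof.
  intros H0 He Hne.
  assert (Ha : 0 < /s0) by (apply Rinv_0_lt_compat; auto).
  assert (Hb : 0 < /se) by (apply Rinv_0_lt_compat; auto).
  assert (Hab : /s0 <> /se).
  { intro E. apply Hne. rewrite <- (Rinv_inv s0), <- (Rinv_inv se), E. reflexivity. }
  assert (Hc : /s0 + /se <> 0) by lra.
  assert (Hd : /se - /s0 <> 0) by lra.
  assert (Hc' : /se + /s0 <> 0) by lra.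
  assert (Hd' : /s0 - /se <> 0) by lra.
  replace (s0 / (s0 + se)) with (/se / (/s0 + /se)) by (field; lra).
  apply glue with (g1 := fun h => T01c theta0 (/s0) (/se) h / T10c (/s0) (/se) h)
                  (g2 := fun h => T01c (theta0+h) (/se) (/s0) (-h) / T10c (/se) (/s0) (-h)).
  - intros h Hh.
    rewrite (pm_case theta0 s0 se (theta0+h) theta0 h (/s0) (/se)); auto.
    + rewrite Tc_eq1, Tc_eq0 by auto. reflexivity.
    + intros th. replace (theta0 + h - th - 0) with (-(th - (theta0+h))) by ring.
      rewrite Rabs_Ropp. unfold Rdiv. ring.
  - intros h Hh.
    rewrite (pm_case theta0 s0 se (theta0+h) (theta0+h) (-h) (/se) (/s0)); auto.
    + rewrite Tc_eq1, Tc_eq0 by auto. reflexivity.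
    + lra.
    + intros th. replace (theta0 + h + - h) with theta0 by ring.
      replace (theta0 + h - th - 0) with (-(th - (theta0+h))) by ring.
      rewrite Rabs_Ropp. unfold Rdiv. ring.
  - apply D1; auto.
  - replace (/se / (/s0 + /se)) with (/se / (/se + /s0)) by (rewrite Rplus_comm; reflexivity).
    apply D2; auto.
Qed.
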